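(* For any integer $t\geq 3$, there exist a connected graph $G$ and a function $g:V(G_1)\to V(G_2)$ such that $Dist(G)-Dist(F_G)=t$.
   Context: $Dist(H)$ is the least $t$ such that $H$ has a labeling $V(H)\to\{1,\dots,t\}$ preserved by no non-identity automorphism of $H$. Functigraph: for disjoint copies $G_1,G_2$ of a connected graph $G$ and a function $g:V(G_1)\to V(G_2)$, $F_G$ has vertex set $V(G_1)\cup V(G_2)$ and edge set $E(G_1)\cup E(G_2)\cup\{uv: u\in V(G_1),\ g(u)=v\}$. *)

(* Defs.v *)
From mathcomp Require Import all_boot all_fingroup.
Set Implicit Arguments. Unset Strict Implicit. Unset Printing Implicit Defensive.

Definition simple_graph (T : finType) (e : rel T) : Prop :=
  irreflexive e /\ symmetric e.

Definition connected_graph (T : finType) (e : rel T) : Prop :=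
  0 < #|T| /\ forall x y : T, connect e x y.

Definition is_aut (T : finType) (e : rel T) (s : {perm T}) : bool :=
  [forall x, forall y, e (s x) (s y) == e x y].

(* a labeling with labels in {1,...,k} (encoded as 'I_k) preserved by no
   non-identity automorphism *)
Definition has_dist_labeling (T : finType) (e : rel T) (k : nat) : bool :=
  [exists f : {ffun T -> 'I_k},
     [forall s : {perm T},
        (is_aut e s && [forall x, f (s x) == f x]) ==> (s == 1%g)]].

Lemma has_dist_labeling_exists (T : finType) (e : rel T) :
  exists k, has_dist_labeling e k.
Proof.
exists #|T|; apply/existsP; exists [ffun x => enum_rank x].
apply/forallP => s; apply/implyP => /andP [_ /forallP H].
apply/eqP/permP => x; rewrite perm1.
by apply: enum_rank_inj; move/eqP: (H x); rewrite !ffunE.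
Qed.

Definition Dist (T : finType) (e : rel T) : nat :=
  ex_minn (has_dist_labeling_exists e).

(* Functigraph F_G on V(G_1) ∪ V(G_2) = T + T (inl = copy G_1, inr = copy G_2) *)
Definition functigraph (T : finType) (e : rel T) (g : T -> T) : rel (T + T) :=
  fun a b =>
    match a, b with
    | inl u, inl v => e u v
    | inr u, inr v => e u v
    | inl u, inr v => g u == v
    | inr v, inl u => g u == v
    end.

(* Main.v *)
Require Import Defs.
From mathcomp Require Import all_boot all_fingroup.
From mathcomp Require Import zify.
Set Implicit Arguments. Unset Strict Implicit. Unset Printing Implicit Defensive.

Lemma autP (T : finType) (e : rel T) (s : {perm T}) :
  is_aut e s -> forall x y, e (s x) (s y) = e x y.
Proof. by move=> /forallP H x y; apply/eqP; move/forallP: (H x). Qed.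

Lemma tperm_aut (T : finType) (e : rel T) x y :
  symmetric e -> (forall z, e x z = e y z) -> is_aut e (tperm x y).
Proof.
move=> se H.
have Hs z : e z x = e z y by rewrite se H se.
apply/forallP => a; apply/forallP => b; apply/eqP.
by case: (tpermP x y a) => [->|->|_ _]; case: (tpermP x y b) => [->|->|_ _];
  rewrite ?H ?Hs.
Qed.

Lemma noDist (T : finType) (e : rel T) c (w : 'I_c -> T) :
  symmetric e -> injective w -> (forall a b z, e (w a) z = e (w b) z) ->
  forall j, j < c -> ~~ has_dist_labeling e j.
Proof.
move=> se iw tw j ltjc; apply/negP => /existsP [f /forallP Hf].
have inj : injective (fun a => f (w a)).
  move=> a b Hab; case: (eqVneq a b) => // nab; exfalso.
  move: (Hf (tperm (w a) (w b))); rewrite tperm_aut //=.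
  have -> : [forall x, f (tperm (w a) (w b) x) == f x].
    apply/forallP => x; case: (tpermP (w a) (w b) x) => [->|->|_ _] //.
    - by rewrite Hab.
    - by rewrite Hab.
  move=> /eqP /permP /(_ (w a)); rewrite tpermL perm1 => /iw Hba.
  by move: nab; rewrite Hba eqxx.
have := leq_card _ inj; rewrite !card_ord; lia.
Qed.

Lemma DistE (T : finType) (e : rel T) k :
  has_dist_labeling e k -> (forall j, j < k -> ~~ has_dist_labeling e j) ->
  Dist e = k.
Proof.
move=> Hk Hlt; rewrite /Dist; case: ex_minnP => m Hm Hmin.
apply/eqP; rewrite eqn_leq Hmin //= leqNgt; apply/negP => /Hlt.
by rewrite Hm.
Qed.

Definition A3 (T : finType) (e : rel T) x :=
  [exists y1, exists y2, exists y3,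
     [&& e x y1, e x y2, e x y3, y1 != y2, y1 != y3 & y2 != y3]].

Lemma A3_aut (T : finType) (e : rel T) (s : {perm T}) x :
  is_aut e s -> A3 e x -> A3 e (s x).
Proof.
move=> /autP Ha /existsP [y1 /existsP [y2 /existsP [y3 H]]].
apply/existsP; exists (s y1); apply/existsP; exists (s y2);
  apply/existsP; exists (s y3).
by rewrite !Ha !(inj_eq perm_inj).
Qed.

Lemma notA3 (T : finType) (e : rel T) x a b :
  (forall y, e x y -> (y == a) || (y == b)) -> ~~ A3 e x.
Proof.
move=> H; apply/negP => /existsP [y1 /existsP [y2 /existsP [y3]]].
case/andP => h1 /andP [h2 /andP [h3]].
move: (H _ h1) (H _ h2) (H _ h3) => /orP[/eqP->|/eqP->] /orP[/eqP->|/eqP->]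
  /orP[/eqP->|/eqP->]; by rewrite ?eqxx ?andbF.
Qed.
Definition star (t : nat) : rel 'I_(t+t).+1 :=
  fun x y => (val x == 0) != (val y == 0).
Arguments star : clear implicits.

Lemma vinord (t : nat) k : k <= t + t -> nat_of_ord (inord k : 'I_(t+t).+1) = k.
Proof. by move=> h; rewrite inordK // ltnS. Qed.

Lemma star_sym (t : nat) : symmetric (star t).
Proof. by move=> x y; rewrite /star eq_sym. Qed.

Lemma star_simple (t : nat) : simple_graph (star t).
Proof. by split; [move=> x; rewrite /star eqxx | exact: star_sym]. Qed.

Lemma star_conn (t : nat) : connected_graph (star t).
Proof.
split; first by rewrite card_ord.
have H x : connect (star t) x ord0 /\ connect (star t) ord0 x.
  case: (eqVneq x ord0) => [->|nx]; first by rewrite connect0.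
  have nx' : val x != 0 by apply: contra nx => /eqP h; apply/eqP/val_inj.
  split; apply: connect1; rewrite /star /= eqxx; move: nx'; rewrite /=; by case: (nat_of_ord x == 0).
move=> x y; apply: connect_trans (proj1 (H x)) (proj2 (H y)).
Qed.

Lemma distG (t : nat) : 3 <= t -> Dist (star t) = t + t.
Proof.
move=> ht; apply: DistE.
- have ht0 : 0 < t + t by lia.
  apply/existsP; exists [ffun x : 'I_(t+t).+1 => Ordinal (ltn_pmod (val x).-1 ht0)].
  apply/forallP => s; apply/implyP => /andP [Ha /forallP Hf].
  have Hl x : (val (s x)).-1 = (val x).-1.
    have h1 := ltn_ord x; have h2 := ltn_ord (s x).
    move: (Hf x); rewrite !ffunE -val_eqE /= !modn_small; try lia.
  have nA x : val x != 0 -> ~~ A3 (star t) x.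
    move=> nx; apply: (@notA3 _ _ _ ord0 ord0) => y.
    rewrite /star (negbTE nx) orbb -val_eqE /=; by case: (nat_of_ord y == 0).
  have s0 : s ord0 = ord0.
    have : A3 (star t) (s ord0).
      apply: A3_aut Ha _; apply/existsP; exists (inord 1); apply/existsP;
      exists (inord 2); apply/existsP; exists (inord 3).
      rewrite /star -!val_eqE /= !vinord; lia.
    case: (eqVneq (val (s ord0)) 0) => [h|/nA /negbTE -> //].
    by move=> _; apply: val_inj.
  apply/eqP/permP => x; rewrite perm1; apply: val_inj.
  case: (eqVneq (val x) 0) => [h|nx].
    have hx : x = ord0 by apply: val_inj; rewrite h.
    by rewrite hx s0.
  have : val (s x) != 0.
    apply: contra nx => /eqP h.
    have : s x = s ord0 by rewrite s0; apply: val_inj.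
    by move/perm_inj => ->.
  move: (Hl x) nx; lia.
- move=> j hj; apply: (@noDist _ _ (t + t) (fun a => inord a.+1)) => //.
  + exact: star_sym.
  + move=> a b; have := ltn_ord a; have := ltn_ord b => ha hb.
    move/(congr1 (@nat_of_ord _)); rewrite !vinord; try lia.
    by move=> [] h; apply: val_inj.
  + move=> a b z; have := ltn_ord a; have := ltn_ord b => ha hb.
    rewrite /star /= !vinord //; lia.
Qed.
Lemma vinordv (t : nat) k : k <= t + t -> val (inord k : 'I_(t+t).+1) = k.
Proof. exact: vinord. Qed.

Definition gmap (t : nat) (x : 'I_(t+t).+1) : 'I_(t+t).+1 :=
  if nat_of_ord x <= t then inord 1 else inord (nat_of_ord x - t + 1).
Arguments gmap : clear implicits.

Definition FG (t : nat) := functigraph (star t) (gmap t).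
Arguments FG : clear implicits.

Lemma vg (t : nat) x : 0 < t ->
  nat_of_ord (gmap t x) = if x <= t then 1 else x - t + 1.
Proof.
move=> ht; have := ltn_ord x => hx.
rewrite /gmap; case: ifP => h; rewrite vinord //; lia.
Qed.

Lemma g1 (t : nat) x : 0 < t -> (gmap t x == inord 1) = (x <= t).
Proof.
move=> ht; rewrite -val_eqE /= vg // vinord; last lia.
case: ifP => h; lia.
Qed.

Lemma gpre (t : nat) u (j : 'I_(t+t).+1) : 0 < t -> nat_of_ord j != 1 ->
  gmap t u == j -> t < u /\ nat_of_ord u = j + t - 1.
Proof.
move=> ht nj /eqP hj; subst j; move: nj; rewrite vg //; have := ltn_ord u.
case: ifP => h; lia.
Qed.

Definition labF (t : nat) (x : 'I_(t+t).+1 + 'I_(t+t).+1) : nat :=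
  match x with
  | inl i => if nat_of_ord i == 0 then 0 else if nat_of_ord i <= t then i - 1
             else i - t - 1
  | inr j => if nat_of_ord j == 0 then 1 else if nat_of_ord j == 1 then 2
             else if nat_of_ord j <= t.+1 then j - 2 else j - t - 2
  end.
Arguments labF : clear implicits.

Lemma labF_lt (t : nat) x : 3 <= t -> labF t x < t.
Proof.
move=> ht; case: x => [i|j] /=.
  have := ltn_ord i; case: ifP => h1; [lia|]; case: ifP => h2; lia.
have := ltn_ord j; case: ifP => h1; [lia|]; case: ifP => h2; [lia|].
case: ifP => h3; lia.
Qed.

Lemma eq_ll (T1 T2 : eqType) (a b : T1) : (inl a == inl b :> T1 + T2) = (a == b).
Proof. by []. Qed.
Lemma eq_rr (T1 T2 : eqType) (a b : T2) : (inr a == inr b :> T1 + T2) = (a == b).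
Proof. by []. Qed.
Lemma eq_lr (T1 T2 : eqType) (a : T1) (b : T2) : (inl a == inr b :> T1 + T2) = false.
Proof. by []. Qed.
Lemma eq_rl (T1 T2 : eqType) (a : T1) (b : T2) : (inr b == inl a :> T1 + T2) = false.
Proof. by []. Qed.

Lemma A3char (t : nat) x : 3 <= t -> A3 (FG t) x ->
  [\/ x = inl ord0, x = inr ord0 | x = inr (inord 1)].
Proof.
move=> ht; case: x => [i|j] hA.
  case: (eqVneq (nat_of_ord i) 0) => [h|ni].
    by constructor 1; congr inl; apply: val_inj.
  exfalso; move: hA; apply/negP.
  apply: (@notA3 _ _ _ (inl ord0) (inr (gmap t i))) => [[k|k]] /=.
    rewrite /star (negbTE ni) eq_ll eq_lr orbF -val_eqE /=.
    by case: (nat_of_ord k == 0).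
  by move=> /eqP ->; rewrite ?eq_rr ?eqxx ?orbT.
case: (eqVneq (nat_of_ord j) 0) => [h|nj0].
  by constructor 2; congr inr; apply: val_inj.
case: (eqVneq (nat_of_ord j) 1) => [h|nj1].
  by constructor 3; congr inr; apply: val_inj; rewrite /= vinord //; lia.
exfalso; move: hA; apply/negP.
apply: (@notA3 _ _ _ (inr ord0) (inl (inord (j + t - 1)))) => [[u|k]] /=.
  move=> /gpre [] //; first lia.
  move=> h1 h2; apply/eqP; congr inl; apply: val_inj; rewrite /= vinord //.
  have := ltn_ord u; lia.
rewrite /star (negbTE nj0) eq_rr eq_rl orbF -val_eqE /=.
by case: (nat_of_ord k == 0).
Qed.

Lemma A3_B0 (t : nat) : 3 <= t -> A3 (FG t) (inl ord0).
Proof.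
move=> ht; apply/existsP; exists (inl (inord 1)); apply/existsP;
  exists (inl (inord 2)); apply/existsP; exists (inl (inord 3)).
rewrite /= /star ?eq_ll -!val_eqE /= !vinordv; lia.
Qed.

Lemma A3_B1 (t : nat) : 3 <= t -> A3 (FG t) (inr ord0).
Proof.
move=> ht; apply/existsP; exists (inr (inord 1)); apply/existsP;
  exists (inr (inord 2)); apply/existsP; exists (inr (inord 3)).
rewrite /= /star ?eq_rr -!val_eqE /= !vinordv; lia.
Qed.

Lemma A3_B2 (t : nat) : 3 <= t -> A3 (FG t) (inr (inord 1)).
Proof.
move=> ht; apply/existsP; exists (inr ord0); apply/existsP;
  exists (inl (inord 1)); apply/existsP; exists (inl (inord 2)).
rewrite /= /star !g1; try lia. apply/and4P; split; rewrite ?vinord ?vinordv //; try lia. apply/eqP => [[h]]; move: (congr1 (@nat_of_ord _) h); rewrite !vinord; lia.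
Qed.

Lemma FGll (t : nat) a b : FG t (inl a) (inl b) = ((nat_of_ord a == 0) != (nat_of_ord b == 0)).
Proof. by []. Qed.
Lemma FGrr (t : nat) a b : FG t (inr a) (inr b) = ((nat_of_ord a == 0) != (nat_of_ord b == 0)).
Proof. by []. Qed.
Lemma FGlr (t : nat) u v : FG t (inl u) (inr v) = (gmap t u == v).
Proof. by []. Qed.
Lemma FGrl (t : nat) u v : FG t (inr v) (inl u) = (gmap t u == v).
Proof. by []. Qed.

Lemma labL (t : nat) (i : 'I_(t+t).+1) : nat_of_ord i != 0 ->
  labF t (inl i) = if i <= t then i - 1 else i - t - 1.
Proof. by move=> h; rewrite /= (negbTE h). Qed.

Lemma labR (t : nat) (j : 'I_(t+t).+1) : nat_of_ord j != 0 -> nat_of_ord j != 1 ->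
  labF t (inr j) = if j <= t.+1 then j - 2 else j - t - 2.
Proof. by move=> h h'; rewrite /= (negbTE h) (negbTE h'). Qed.

Lemma upF (t : nat) : 3 <= t -> has_dist_labeling (FG t) t.
Proof.
move=> ht; have ht0 : 0 < t by lia.
apply/existsP; exists [ffun x => Ordinal (ltn_pmod (labF t x) ht0)].
apply/forallP => s; apply/implyP => /andP [Ha /forallP Hf].
have Hl x : labF t (s x) = labF t x.
  have h1 := labF_lt x ht; have h2 := labF_lt (s x) ht.
  move: (Hf x); rewrite !ffunE -val_eqE /= !modn_small //; by move/eqP.
have Hs := autP Ha.
have fixB b : A3 (FG t) b -> s b = b.
  move=> hb; have := A3char ht (A3_aut Ha hb); have := A3char ht hb.
  have v1 : nat_of_ord (inord 1 : 'I_(t+t).+1) = 1 by rewrite vinord //; lia.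
  move=> [] Eb [] Es; move: (Hl b); rewrite Es Eb // /labF ?v1 /=; lia.
have F0 := fixB _ (A3_B0 ht); have F1 := fixB _ (A3_B1 ht);
  have F2 := fixB _ (A3_B2 ht).
have notbig x b : A3 (FG t) b -> s x = b -> x = b.
  by move=> hb E; apply: (@perm_inj _ s); rewrite E fixB.
have fixL i : nat_of_ord i != 0 -> s (inl i) = inl i.
  move=> ni.
  have e0 : FG t (s (inl i)) (inl ord0) by rewrite -F0 Hs FGll (negbTE ni).
  have e2 : FG t (s (inl i)) (inr (inord 1)) = (i <= t)
    by rewrite -F2 Hs FGlr g1 //.
  case E: (s (inl i)) => [i'|j'].
    rewrite E FGll in e0; rewrite E FGlr g1 // in e2.
    have ni' : nat_of_ord i' != 0 by move: e0; case: (nat_of_ord i' == 0).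
    have := Hl (inl i); rewrite E !labL //.
    move=> hl; congr inl; apply: val_inj => /=; move: hl e2.
    case: (leqP i t); case: (leqP i' t); move: ni ni'; lia.
  rewrite E FGrl in e0.
  have : s (inl i) = inr (inord 1) by rewrite E -(eqP e0) /gmap /=.
  by move/(notbig _ _ (A3_B2 ht)).
have glift j : 2 <= nat_of_ord j <= t.+1 ->
    nat_of_ord (inord (j + t - 1) : 'I_(t+t).+1) != 0 /\
    gmap t (inord (j + t - 1)) = j.
  move=> hj; rewrite vinord; last lia.
  split; first lia.
  apply: val_inj; rewrite /= vg // vinord; last lia.
  case: ifP; lia.
apply/eqP/permP => x; rewrite perm1.
case: x => [i|j].
  case: (eqVneq (nat_of_ord i) 0) => [h|ni]; last exact: fixL.
  by have -> : i = ord0 by apply: val_inj.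
case: (eqVneq (nat_of_ord j) 0) => [h|nj0].
  by have -> : j = ord0 by apply: val_inj.
case: (eqVneq (nat_of_ord j) 1) => [h|nj1].
  have -> : j = inord 1 by apply: val_inj; rewrite /= vinord //; lia.
  exact: F2.
have e0 : FG t (s (inr j)) (inl ord0) = false.
  rewrite -F0 Hs FGrl; apply/negbTE; rewrite -val_eqE /= vg //=; lia.
case E: (s (inr j)) => [i'|j'].
  rewrite E FGll in e0.
  have hi : nat_of_ord i' == 0 by move: e0; case: (nat_of_ord i' == 0).
  have : s (inr j) = inl ord0 by rewrite E; congr inl; apply: val_inj; apply/eqP.
  by move/(notbig _ _ (A3_B0 ht)).
have nj'0 : nat_of_ord j' != 0.
  apply/negP => /eqP h.
  have : s (inr j) = inr ord0 by rewrite E; congr inr; apply: val_inj.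
  by move/(notbig _ _ (A3_B1 ht)) => [] /(congr1 (@nat_of_ord _)); move: nj0 => /eqP.
have nj'1 : nat_of_ord j' != 1.
  apply/negP => /eqP h.
  have : s (inr j) = inr (inord 1).
    by rewrite E; congr inr; apply: val_inj; rewrite /= vinord //; lia.
  move/(notbig _ _ (A3_B2 ht)) => [] /(congr1 (@nat_of_ord _)); rewrite vinord; lia.
have adj u : nat_of_ord u != 0 -> (gmap t u == j') = (gmap t u == j).
  by move=> nu; rewrite -FGrl -E -(fixL _ nu) Hs FGrl.
congr inr; apply: val_inj => /=.
case: (leqP j t.+1) => hj.
  have [nu gu] := glift j (ltac:(lia)).
  move: (adj _ nu); rewrite gu eqxx => /eqP.
  by move/(congr1 (@nat_of_ord _)).
case: (leqP j' t.+1) => hj'.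
  have [nu gu] := glift j' (ltac:(lia)).
  move: (adj _ nu); rewrite gu eqxx => /esym /eqP.
  move/(congr1 (@nat_of_ord _)); lia.
have := Hl (inr j); rewrite E !labR //.
rewrite (leqNgt j' t.+1) hj' (leqNgt j t.+1) hj /=.
have := ltn_ord j; have := ltn_ord j'; lia.
Qed.

Lemma FG_sym (t : nat) : symmetric (FG t).
Proof. by move=> [a|a] [b|b] //=; rewrite /star eq_sym. Qed.

Lemma distF (t : nat) : 3 <= t -> Dist (FG t) = t.
Proof.
move=> ht; apply: DistE; first exact: upF.
move=> j hj.
apply: (@noDist _ _ t (fun a => inl (inord a.+1))) => //.
- exact: FG_sym.
- move=> a b [] /(congr1 (@nat_of_ord _)).
  have := ltn_ord a; have := ltn_ord b => ha hb.
  rewrite !vinord; try lia.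
  by move=> [] h; apply: val_inj.
- move=> a b z; have := ltn_ord a; have := ltn_ord b => ha hb.
  have ga c : c < t -> gmap t (inord c.+1) = inord 1.
    by move=> hc; rewrite /gmap vinord ?ifT //; lia.
  case: z => [k|k].
    by rewrite !FGll !vinord //; lia.
  by rewrite !FGlr !ga.
Qed.

Theorem lemma2p8 (t : nat) (ht : 3 <= t) :
  exists (n : nat) (e : rel 'I_n) (g : 'I_n -> 'I_n),
    simple_graph e /\ connected_graph e /\
    Dist e = Dist (functigraph e g) + t.
Proof.
exists (t + t).+1, (star t), (gmap t).
split; first exact: star_simple.
split; first exact: star_conn.
rewrite distG //; have := distF ht; rewrite /FG => ->; by [].
Qed.
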